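(* Let $(\alpha,\beta)\in\Delta_K$, $(\alpha_n,\beta_n)=T^n(\alpha,\beta)$, $\varepsilon_n=\varepsilon(\alpha_n,\beta_n)$, and $n\ge0$. Then the dual substitution $\Theta_{\varepsilon_n}$ satisfies: (1) if $(\bar{\bar x},i^* )\in\mathscr S(\bar{\bar\nu}(\alpha_{n+1},\beta_{n+1}))$, then every unit square occurring in $\Theta_{\varepsilon_n}(\bar{\bar x},i^* )$ belongs to $\mathscr S(\bar{\bar\nu}(\alpha_n,\beta_n))$, so $\Theta_{\varepsilon_n}(\bar{\bar x},i^* )\in\mathcal G(\bar{\bar\nu}(\alpha_n,\beta_n))$; (2) two distinct unit squares of $\mathscr S(\bar{\bar\nu}(\alpha_{n+1},\beta_{n+1}))$ are sent to images having no unit square in common (i.e. disjoint except for their boundaries); (3) for every $(\bar{\bar z},k^* )\in\mathscr S(\bar{\bar\nu}(\alpha_n,\beta_n))$ there exists $(\bar{\bar x},i^* )\in\mathscr S(\bar{\bar\nu}(\alpha_{n+1},\beta_{n+1}))$ such that $\Theta_{\varepsilon_n}(\bar{\bar x},i^* )\succ(\bar{\bar z},k^* )$, i.e. $(\bar{\bar z},k^* )$ is one of the unit squares of $\Theta_{\varepsilon_n}(\bar{\bar x},i^* )$.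
   Context: Let $K\subset\mathbb{R}$ be a real cubic number field, $N=N_{K/\mathbb{Q}}$ its norm. Fix $r=p/q$ with $p,q$ positive coprime integers and $3\nmid p$. Let $\Delta_K=\{(\alpha,\beta)\in K^2:\ 1,\alpha,\beta \text{ linearly independent over }\mathbb{Q},\ \alpha,\beta>0,\ \alpha+\beta<1\}$ and $Ind=\{(i,j): i,j\in\{0,1,2\},\ i\neq j\}$. Let $\Delta=\{(x,y)\in\mathbb{R}^2: x,y\ge 0,\ x+y\le 1\}$ and $\triangle(1,2)=\{(x,y)\in\Delta: x\ge y\}$, $\triangle(2,1)=\{x\le y\}$, $\triangle(0,1)=\{2x+y-1\le 0\}$, $\triangle(1,0)=\{2x+y-1\ge 0\}$, $\triangle(0,2)=\{x+2y-1\le0\}$, $\triangle(2,0)=\{x+2y-1\ge 0\}$ (all subsets of $\Delta$). Maps $T_{(i,j)}:\triangle(i,j)\to\Delta$: $T_{(1,2)}(x,y)=(\frac{x-y}{1-y},\frac{y}{1-y})$, $T_{(2,1)}(x,y)=(\frac{x}{1-x},\frac{y-x}{1-x})$, $T_{(0,1)}(x,y)=(\frac{x}{1-x},\frac{y}{1-x})$, $T_{(1,0)}(x,y)=(\frac{2x+y-1}{x+y},\frac{y}{x+y})$, $T_{(0,2)}(x,y)=(\frac{x}{1-y},\frac{y}{1-y})$, $T_{(2,0)}(x,y)=(\frac{x}{x+y},\frac{x+2y-1}{x+y})$. For $(\alpha,\beta)\in\Delta_K$ put $\gamma=1-\alpha-\beta$ and $v_{\{1,2\}}=\frac{\alpha^r\beta^r}{|N(\alpha)N(\beta)|}$,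 $v_{\{0,1\}}=\frac{\alpha^r\gamma^r}{|N(\alpha)N(\gamma)|}$, $v_{\{0,2\}}=\frac{\beta^r\gamma^r}{|N(\beta)N(\gamma)|}$; the maximum is attained at a unique pair $\{i_0,j_0\}$. $\varepsilon(\alpha,\beta)$ is the ordered pair $(i,j)\in Ind$ with $\{i,j\}=\{i_0,j_0\}$ and $(\alpha,\beta)\in\triangle(i,j)$, and $T(\alpha,\beta)=T_{\varepsilon(\alpha,\beta)}(\alpha,\beta)$ (a map $\Delta_K\to\Delta_K$). For $(i,j)\in Ind$, $M_{(i,j)}=(m_{k\ell})_{0\le k,\ell\le2}$ with $m_{k\ell}=1$ if $k=\ell$ or $(k,\ell)=(i,j)$, and $0$ otherwise; $L_{(i,j)}:=M_{(j,i)}$. For $(\alpha,\beta)\in\Delta_K$, $\bar{\bar\nu}(\alpha,\beta)={}^t(1-\alpha-\beta,\alpha,\beta)$. Let $\bar{\bar e}_0,\bar{\bar e}_1,\bar{\bar e}_2$ be the standard basis of $\mathbb{R}^3$. A unit square $(\bar{\bar x},i^* )$ ($\bar{\bar x}\in\mathbb{Z}^3$, $i\in\{0,1,2\}$) is the set $\{\bar{\bar x}+t\bar{\bar e}_j+u\bar{\bar e}_k: t,u\in[0,1]\}$ with $\{i,j,k\}=\{0,1,2\}$. For $\bar{\bar a}\in\mathbb{R}^3_{>0}$ with $\mathbb{Q}$-linearly independent coordinates, the stepped surface is $\mathscr S(\bar{\bar a})=\{(\bar{\bar x},i^* ): \bar{\bar x}\in\mathbb{Z}^3, i\in\{0,1,2\},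 \langle\bar{\bar x},\bar{\bar a}\rangle>0,\ \langle\bar{\bar x}-\bar{\bar e}_i,\bar{\bar a}\rangle\le0\}$, and $\mathcal G(\bar{\bar a})$ is the free $\mathbb{Z}$-module of finite formal sums of elements of $\mathscr S(\bar{\bar a})$. A sum with all coefficients $1$ (a patch) is identified with its finite set of squares; for patches $\gamma,\delta$, $\gamma\prec\delta$ (equivalently $\delta\succ\gamma$) means the set of squares of $\gamma$ is contained in that of $\delta$. For $(i,j)\in Ind$ the dual substitution $\Theta_{(i,j)}$ is defined on unit squares by $\Theta_{(i,j)}(\bar{\bar x},j^* )=(L_{(i,j)}^{-1}(\bar{\bar x}+\bar{\bar e}_i),i^* )+(L_{(i,j)}^{-1}\bar{\bar x},j^* )$ and $\Theta_{(i,j)}(\bar{\bar x},k^* )=(L_{(i,j)}^{-1}\bar{\bar x},k^* )$ for $k\neq j$, and extended additively to formal sums. *)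

(* Defs.v *)
From HB Require Import structures.
From mathcomp Require Import all_boot all_order all_algebra.
From mathcomp Require Import boolp classical_sets reals exp.
From mathcomp Require Import Rstruct.
From Stdlib Require Import Rdefinitions.

Set Implicit Arguments.
Unset Strict Implicit.
Unset Printing Implicit Defensive.
Import Order.TTheory GRing.Theory Num.Theory.
Local Open Scope ring_scope.

Notation RR := Rdefinitions.R.

Definition is_Qbasis3 (K : set RR) (b : 'I_3 -> RR) : Prop :=
  (forall i, K (b i)) /\
  (forall c : 'I_3 -> rat, \sum_i ratr (c i) * b i = 0 -> forall i, c i = 0) /\
  (forall x, K x -> exists c : 'I_3 -> rat, x = \sum_i ratr (c i) * b i).

Definition real_cubic_field (K : set RR) : Prop :=
  K 1 /\
  (forall x y, K x -> K y -> K (x + y)) /\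
  (forall x, K x -> K (- x)) /\
  (forall x y, K x -> K y -> K (x * y)) /\
  (forall x, K x -> x != 0 -> K x^-1) /\
  exists b, is_Qbasis3 K b.

Definition mult_matrix (b : 'I_3 -> RR) (x : RR) (M : 'M[rat]_3) : Prop :=
  forall i, x * b i = \sum_j ratr (M i j) * b j.

(* N_{K/Q}(x) = det of the Q-linear map "multiplication by x" on K
   (independent of the chosen basis). *)
Definition normK (K : set RR) (x : RR) : RR :=
  ratr (\det (xget 0 [set M | exists b, is_Qbasis3 K b /\ mult_matrix b x M])).

Definition in_DeltaK (K : set RR) (a b : RR) : Prop :=
  K a /\ K b /\
  (forall c0 c1 c2 : rat, ratr c0 + ratr c1 * a + ratr c2 * b = 0 ->
     [/\ c0 = 0, c1 = 0 & c2 = 0]) /\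
  0 < a /\ 0 < b /\ a + b < 1.

Definition i0 : 'I_3 := @Ordinal 3 0 isT.
Definition i1 : 'I_3 := @Ordinal 3 1 isT.
Definition i2 : 'I_3 := @Ordinal 3 2 isT.

(* The pair {i0,j0} maximizing v is unique on Delta_K (paper); ties are broken
   arbitrarily here, which is irrelevant on Delta_K.  The order (i,j) is chosen
   by membership in the closed triangle triangle(i,j); on Delta_K the point never
   lies on the separating lines (1, alpha, beta are Q-independent). *)
Definition eps (K : set RR) (r : RR) (p : RR * RR) : 'I_3 * 'I_3 :=
  let a := p.1 in let b := p.2 in let g := 1 - a - b in
  let v12 := a `^ r * b `^ r / `|normK K a * normK K b| in
  let v01 := a `^ r * g `^ r / `|normK K a * normK K g| in
  let v02 := b `^ r * g `^ r / `|normK K b * normK K g| in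
  if (v01 <= v12) && (v02 <= v12) then
    (if b <= a then (i1, i2) else (i2, i1))
  else if v02 <= v01 then
    (if 2 * a + b - 1 <= 0 then (i0, i1) else (i1, i0))
  else
    (if a + 2 * b - 1 <= 0 then (i0, i2) else (i2, i0)).

Definition Tmap (e : 'I_3 * 'I_3) (p : RR * RR) : RR * RR :=
  let x := p.1 in let y := p.2 in
  match nat_of_ord e.1, nat_of_ord e.2 with
  | 1%N, 2%N => ((x - y) / (1 - y), y / (1 - y))
  | 2%N, 1%N => (x / (1 - x), (y - x) / (1 - x))
  | 0%N, 1%N => (x / (1 - x), y / (1 - x))
  | 1%N, 0%N => ((2 * x + y - 1) / (x + y), y / (x + y))
  | 0%N, 2%N => (x / (1 - y), y / (1 - y))
  | 2%N, 0%N => (x / (x + y), (x + 2 * y - 1) / (x + y))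
  | _, _ => p
  end.

Definition T (K : set RR) (r : RR) (p : RR * RR) : RR * RR := Tmap (eps K r p) p.

Definition nu (p : RR * RR) : 'cV[RR]_3 :=
  \col_k (if k == i0 then 1 - p.1 - p.2 else if k == i1 then p.1 else p.2).

Definition square := ('cV[int]_3 * 'I_3)%type.

Definition ebase (i : 'I_3) : 'cV[int]_3 := \col_k (k == i)%:R.

Definition pairing (x : 'cV[int]_3) (a : 'cV[RR]_3) : RR :=
  \sum_k (x k 0)%:~R * a k 0.

Definition stepped (a : 'cV[RR]_3) (s : square) : Prop :=
  0 < pairing s.1 a /\ pairing (s.1 - ebase s.2) a <= 0.

Definition Mmat (i j : 'I_3) : 'M[int]_3 :=
  \matrix_(k, l) ((k == l) || ((k == i) && (l == j)))%:R.

Definition Lmat (i j : 'I_3) : 'M[int]_3 := Mmat j i.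

(* Theta_{(i,j)} as the list of unit squares of the (coefficient-1) formal sum *)
Definition Theta (e : 'I_3 * 'I_3) (s : square) : seq square :=
  let i := e.1 in let j := e.2 in
  let Li := invmx (Lmat i j) in
  if s.2 == j then [:: (Li *m (s.1 + ebase i), i); (Li *m s.1, j)]
  else [:: (Li *m s.1, s.2)].

(* Main.v *)
Require Import Defs.
From mathcomp Require Import all_boot all_order all_algebra.
From mathcomp Require Import boolp classical_sets reals exp Rstruct.
From mathcomp Require Import ring lra.
Import Order.TTheory GRing.Theory Num.Theory.
Local Open Scope ring_scope.
Set Implicit Arguments.
Unset Strict Implicit.

Lemma ord3 (k : 'I_3) : k = i0 \/ k = i1 \/ k = i2.
Proof. case: k => [[|[|[|?]]] ?]; [left|right;left|right;right|done]; exact/val_inj. Qed.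

Lemma sum3 (V : nmodType) (F : 'I_3 -> V) : \sum_k F k = F i0 + F i1 + F i2.
Proof. rewrite !big_ord_recr big_ord0 /= add0r. congr (F _ + F _ + F _); exact/val_inj. Qed.

Definition Linv (i j : 'I_3) : 'M[int]_3 :=
  \matrix_(k, l) ((k == l)%:R - ((k == j) && (l == i))%:R).

Lemma LLinv i j : i != j -> Lmat i j *m Linv i j = 1%:M.
Proof.
move=> hij; apply/matrixP => k l; rewrite !mxE sum3 !mxE.
have [ei|[ei|ei]] := ord3 i; have [ej|[ej|ej]] := ord3 j; subst i j => //;
have [->|[->|->]] := ord3 k; have [->|[->|->]] := ord3 l; by rewrite ?mxE.
Qed.

Lemma LinvL i j : i != j -> Linv i j *m Lmat i j = 1%:M.
Proof.
move=> hij; apply/matrixP => k l; rewrite !mxE sum3 !mxE.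
have [ei|[ei|ei]] := ord3 i; have [ej|[ej|ej]] := ord3 j; subst i j => //;
have [->|[->|->]] := ord3 k; have [->|[->|->]] := ord3 l; by rewrite ?mxE.
Qed.

Lemma invL i j : i != j -> invmx (Lmat i j) = Linv i j.
Proof.
move=> hij; have [hu _] := mulmx1_unit (LLinv hij).
by rewrite -[invmx _]mulmx1 -(LLinv hij) mulKmx.
Qed.

Lemma pairingD x y a : pairing (x + y) a = pairing x a + pairing y a.
Proof. rewrite /pairing -big_split; apply: eq_bigr => k _; by rewrite !mxE intrD mulrDl. Qed.

Lemma pairingB x y a : pairing (x - y) a = pairing x a - pairing y a.
Proof. rewrite /pairing -sumrB; apply: eq_bigr => k _; by rewrite !mxE intrB mulrBl. Qed.

Lemma pairing_e i a : pairing (ebase i) a = a i 0.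
Proof.
rewrite /pairing sum3 !mxE.
have [->|[->|->]] := ord3 i; rewrite /=; ring.
Qed.

Lemma pair_rel i j (nu nu' : 'cV[RR]_3) c y : i != j ->
  (forall k, nu k 0 = c * (nu' k 0 + (k == i)%:R * nu' j 0)) ->
  pairing (Linv i j *m y) nu = c * pairing y nu'.
Proof.
move=> hij H; rewrite /pairing !sum3 !mxE !sum3 !mxE !H.
have [ei|[ei|ei]] := ord3 i; have [ej|[ej|ej]] := ord3 j; subst i j => //=;
rewrite ?intrD ?intrB ?intrM /=; ring.
Qed.
Lemma Linv_inj i j (x y : 'cV[int]_3) : i != j -> Linv i j *m x = Linv i j *m y -> x = y.
Proof.
move=> hij E. by rewrite -[x]mul1mx -[y]mul1mx -(LLinv hij) -!mulmxA E.
Qed.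

Lemma stepE a x k : stepped a (x, k) <-> 0 < pairing x a /\ pairing x a - a k 0 <= 0.
Proof. by rewrite /stepped /= pairingB pairing_e. Qed.

Lemma generic (e : 'I_3 * 'I_3) (nu nu' : 'cV[RR]_3) c :
  e.1 != e.2 -> 0 < c -> (forall k, 0 < nu' k 0) ->
  (forall k, nu k 0 = c * (nu' k 0 + (k == e.1)%:R * nu' e.2 0)) ->
  (forall s : square, stepped nu' s ->
     forall t, t \in Theta e s -> stepped nu t) /\
  (forall s1 s2 : square, stepped nu' s1 -> stepped nu' s2 -> s1 <> s2 ->
     forall t, ~ (t \in Theta e s1 /\ t \in Theta e s2)) /\
  (forall t : square, stepped nu t ->
     exists s : square, stepped nu' s /\ t \in Theta e s).
Proof.
case: e => i j /= hij c0 pos H.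
have Hj : nu j 0 = c * nu' j 0.
  by rewrite H eq_sym (negbTE hij) mul0r addr0.
have Hi : nu i 0 = c * (nu' i 0 + nu' j 0) by rewrite H eqxx mul1r.
have Hk : forall k, k != i -> nu k 0 = c * nu' k 0.
  by move=> k hk; rewrite H (negbTE hk) mul0r addr0.
have PR := fun y => @pair_rel i j nu nu' c y hij H.
have Hcmp : forall k, c * nu' k 0 <= nu k 0.
  move=> k; case: (eqVneq k i) => [->|hk]; last by rewrite Hk.
  by rewrite Hi ler_pM2l // lerDl ltW.
rewrite /Theta /= (invL hij).
split.
  case=> x k /stepE /= [h1 h2] t.
  case: (eqVneq k j) => [ekj|nkj].
    subst k; rewrite !inE => /orP [] /eqP -> ; apply/stepE.
      rewrite PR pairingD pairing_e Hi; split.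
        by rewrite mulr_gt0 // addr_gt0.
      by rewrite -mulrBr pmulr_rle0 //; lra.
    rewrite PR Hj; split; first by rewrite mulr_gt0.
    by rewrite -mulrBr pmulr_rle0.
  rewrite !inE => /eqP ->; apply/stepE; rewrite PR; split; first by rewrite mulr_gt0.
  have := Hcmp k. have : c * pairing x nu' <= c * nu' k 0 by rewrite ler_pM2l //; lra.
  lra.
split.
  case=> x1 k1 [x2 k2] /stepE /= [a1 a2] /stepE /= [b1 b2] neq t [].
  have cs : forall x k, t \in (if k == j then [:: (Linv i j *m (x + ebase i), i); (Linv i j *m x, j)]
                      else [:: (Linv i j *m x, k)]) ->
      t = (Linv i j *m x, k) \/ (k = j /\ t = (Linv i j *m (x + ebase i), i)).
    move=> x k; case: (eqVneq k j) => [->|_]; rewrite !inE.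
      by case/orP => /eqP ->; [right|left].
    by move/eqP ->; left.
  move=> /cs [] T1 /cs [] T2.
  - apply: neq; rewrite T1 in T2; case: T2 => /(Linv_inj hij) -> ->; done.
  - case: T2 => ej T2. rewrite T1 in T2; case: T2 => /(Linv_inj hij) E ek; subst.
    move: a2 b1; rewrite pairingD pairing_e; lra.
  - case: T1 => ej T1. move: T2; rewrite T1; case => /(Linv_inj hij) E ek; subst.
    move: b2 a1; rewrite pairingD pairing_e; lra.
  - case: T1 => ej T1; case: T2 => ek T2; move: T2; rewrite T1; case => /(Linv_inj hij) /addIr E.
    by apply: neq; subst.
case=> z k /stepE /= [h1 h2].
set x := Lmat i j *m z.
have zE : Linv i j *m x = z by rewrite /x mulmxA (LinvL hij) mul1mx.
have Px : pairing z nu = c * pairing x nu' by rewrite -zE PR.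
case: (eqVneq k i) => [eki|nki].
  subst k.
  case: (lerP (pairing x nu') (nu' i 0)) => hx.
    exists (x, i); split.
      apply/stepE; split; last lra.
      by move: h1; rewrite Px pmulr_rgt0.
    by rewrite /= (negbTE hij) inE zE.
  exists (x - ebase i, j); split.
    apply/stepE; rewrite pairingB pairing_e; split; first lra.
    move: h2; rewrite Px Hi -mulrBr pmulr_rle0 //; lra.
  by rewrite /= eqxx inE subrK zE eqxx.
exists (x, k); split.
  apply/stepE; rewrite -(pmulr_rgt0 _ c0) -Px; split => //.
  move: h2; rewrite Px Hk // -mulrBr pmulr_rle0 //.
rewrite /=; case: (eqVneq k j) => [->|_]; rewrite !inE zE eqxx ?orbT //.
Qed.

Definition indep (v : 'cV[RR]_3) :=
  forall d : 'I_3 -> rat, \sum_k ratr (d k) * v k 0 = 0 -> forall k, d k = 0.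

Definition Inv (p : RR * RR) := (forall k, 0 < nu p k 0) /\ indep (nu p).

Lemma nu0 x y : nu (x, y) i0 0 = 1 - x - y. Proof. by rewrite mxE. Qed.
Lemma nu1 x y : nu (x, y) i1 0 = x. Proof. by rewrite mxE. Qed.
Lemma nu2 x y : nu (x, y) i2 0 = y. Proof. by rewrite mxE. Qed.

Lemma indep_neq v k l : indep v -> k != l -> v k 0 != v l 0.
Proof.
move=> hv hkl; apply/eqP => E.
pose d := fun m : 'I_3 => ((m == k)%:R - (m == l)%:R : rat).
have := hv d; rewrite sum3 /d => /(_ _ k); rewrite eqxx (negbTE hkl).
suff -> : ratr ((i0 == k)%:R - (i0 == l)%:R) * v i0 0 +
   ratr ((i1 == k)%:R - (i1 == l)%:R) * v i1 0 +
   ratr ((i2 == k)%:R - (i2 == l)%:R) * v i2 0 = 0 :> RR by move/(_ erefl).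
move: E hkl.
have [->|[->|->]] := ord3 k; have [->|[->|->]] := ord3 l => //= E _;
rewrite !(rmorphB, rmorph0, rmorph1) E; ring.
Qed.

Lemma rel_indep i j (nu nu' : 'cV[RR]_3) c : i != j ->
  (forall k, nu k 0 = c * (nu' k 0 + (k == i)%:R * nu' j 0)) ->
  indep nu -> indep nu'.
Proof.
move=> hij H hv d hd.
pose d' := fun m : 'I_3 => d m - (m == j)%:R * d i.
have : \sum_k ratr (d' k) * nu k 0 = c * \sum_k ratr (d k) * nu' k 0.
  rewrite !sum3 /d' !H.
  have [ei|[ei|ei]] := ord3 i; have [ej|[ej|ej]] := ord3 j; subst i j => //=;
  rewrite !(rmorphB, rmorphM, rmorph0, rmorph1) /=; ring.
rewrite hd mulr0 => /hv h0.
have di : d i = 0 by have := h0 i; rewrite /d' (negbTE hij) mul0r subr0.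
by move=> k; have := h0 k; rewrite /d' di mulr0 subr0.
Qed.

Lemma pos_rel i j (nu nu' : 'cV[RR]_3) c : i != j -> 0 < c ->
  (forall k, nu k 0 = c * (nu' k 0 + (k == i)%:R * nu' j 0)) ->
  (forall k, 0 < nu k 0) -> nu j 0 < nu i 0 -> forall k, 0 < nu' k 0.
Proof.
move=> hij c0 H pos hji.
have Hj : nu j 0 = c * nu' j 0.
  by rewrite H eq_sym (negbTE hij) mul0r addr0.
move=> k; case: (eqVneq k i) => [->|hk].
  have : nu i 0 - nu j 0 = c * nu' i 0 by rewrite H eqxx Hj mul1r; ring.
  move=> E; rewrite -(pmulr_rgt0 _ c0) -E subr_gt0 //.
by have := pos k; rewrite H (negbTE hk) mul0r addr0 pmulr_rgt0.
Qed.

Ltac nz := apply/eqP => hh; lra.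

Lemma stepT K r p : Inv p ->
  let e := eps K r p in
  e.1 != e.2 /\ nu p e.2 0 < nu p e.1 0 /\
  exists c, 0 < c /\ forall k, nu p k 0 = c * (nu (Tmap e p) k 0 + (k == e.1)%:R * nu (Tmap e p) e.2 0).
Proof.
case: p => a b [pos hv] /=.
have ha := pos i1; have hb := pos i2; have hg := pos i0.
rewrite nu0 in hg; rewrite nu1 in ha; rewrite nu2 in hb.
have nab : a != b by have := indep_neq hv (isT : i1 != i2); rewrite nu1 nu2.
have nag : a != 1 - a - b by have := indep_neq hv (isT : i1 != i0); rewrite nu1 nu0.
have nbg : b != 1 - a - b by have := indep_neq hv (isT : i2 != i0); rewrite nu2 nu0.
rewrite /eps /=.
case: ifP => _; [case: ifP => h | case: ifP => _; case: ifP => h]; rewrite /Tmap /=;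
  (split; [done|]); rewrite ?nu0 ?nu1 ?nu2.
- have : b < a by rewrite lt_neqAle eq_sym nab h.
  move=> hlt; split => //; exists (1 - b); split; first lra.
  move=> k; have [->|[->|->]] := ord3 k; rewrite !mxE /=; field; nz.
- have : a < b by rewrite ltNge h.
  move=> hlt; split => //; exists (1 - a); split; first lra.
  move=> k; have [->|[->|->]] := ord3 k; rewrite !mxE /=; field; nz.
- have : a < 1 - a - b by rewrite lt_neqAle nag /=; lra.
  move=> hlt; split => //; exists (1 - a); split; first lra.
  move=> k; have [->|[->|->]] := ord3 k; rewrite !mxE /=; field; nz.
- have : 1 - a - b < a by move/negbT: h; rewrite -ltNge; lra.
  move=> hlt; split => //; exists (a + b); split; first lra.
  move=> k; have [->|[->|->]] := ord3 k; rewrite !mxE /=; field; nz.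
- have : b < 1 - a - b by rewrite lt_neqAle nbg /=; lra.
  move=> hlt; split => //; exists (1 - b); split; first lra.
  move=> k; have [->|[->|->]] := ord3 k; rewrite !mxE /=; field; nz.
- have : 1 - a - b < b by move/negbT: h; rewrite -ltNge; lra.
  move=> hlt; split => //; exists (a + b); split; first lra.
  move=> k; have [->|[->|->]] := ord3 k; rewrite !mxE /=; field; nz.
Qed.

Lemma Inv_T K r p : Inv p -> Inv (T K r p).
Proof.
move=> hI; have [hij [hlt [c [c0 H]]]] := stepT K r hI.
case: hI => pos hv; split.
  exact: (pos_rel hij c0 H pos hlt).
exact: (rel_indep hij H hv).
Qed.

Lemma Inv_start K a b : in_DeltaK K a b -> Inv (a, b).
Proof.
case=> _ [_ [hind [ha [hb hab]]]]; split.
  by move=> k; have [->|[->|->]] := ord3 k; rewrite ?nu0 ?nu1 ?nu2 //; lra.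
move=> d; rewrite sum3 nu0 nu1 nu2 => hd.
have := hind (d i0) (d i1 - d i0) (d i2 - d i0).
rewrite !rmorphB /=.
case. by rewrite -hd; ring.
move=> h0 h1 h2.
have e1 : d i1 = 0 by move/eqP: h1; rewrite subr_eq0 h0 => /eqP.
have e2 : d i2 = 0 by move/eqP: h2; rewrite subr_eq0 h0 => /eqP.
by move=> k; have [->|[->|->]] := ord3 k.
Qed.

Unset Implicit Arguments.
Set Strict Implicit.

Theorem theorem5p5 (K : set RR) (hK : real_cubic_field K)
  (p q : nat) (hp : (0 < p)%N) (hq : (0 < q)%N) (hpq : coprime p q)
  (h3 : ~~ (3 %| p)%N)
  (alpha beta : RR) (hab : in_DeltaK K alpha beta) (n : nat) :
  let r : RR := p%:R / q%:R in
  let pn := iter n (T K r) (alpha, beta) in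
  let pn1 := iter n.+1 (T K r) (alpha, beta) in
  let e := eps K r pn in
  (* (1) *)
  (forall s : square, stepped (nu pn1) s ->
     forall t, t \in Theta e s -> stepped (nu pn) t) /\
  (* (2) *)
  (forall s1 s2 : square, stepped (nu pn1) s1 -> stepped (nu pn1) s2 -> s1 <> s2 ->
     forall t, ~ (t \in Theta e s1 /\ t \in Theta e s2)) /\
  (* (3) *)
  (forall t : square, stepped (nu pn) t ->
     exists s : square, stepped (nu pn1) s /\ t \in Theta e s).
Proof.
move=> r pn pn1 e.
have hI : Inv pn.
  rewrite /pn; elim: n {pn pn1 e} => [|n IH] /=; first exact: Inv_start hab.
  exact: Inv_T.
have [hij [hlt [c [c0 H]]]] := stepT K r hI.
have [pos _] := Inv_T K r hI.
exact: (generic hij c0 pos H).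
Qed.
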